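(* Let $\mathcal{H}$ be a real Hilbert space, let $A\colon\mathcal{H}\rightrightarrows\mathcal{H}$ be maximally monotone and let $B\colon \mathcal{H}\to\mathcal{H}$ be locally Lipschitz. Let $\delta\in(0,1)$, $\sigma\in(0,1)$, $\rho\in\{1,\sigma^{-1}\}$, $\lambda_{k-1}>0$ and $x_k,x_{k-1}\in\mathcal{H}$. For $\lambda>0$ put $x_{k+1}(\lambda):=J_{\lambda A}\bigl(x_k - \lambda B(x_k) - \lambda_{k-1}(B(x_k)-B(x_{k-1}))\bigr)$. Then there exists a nonnegative integer $i$ such that, with $\lambda=\rho\lambda_{k-1}\sigma^i$, $$\lambda\|B(x_{k+1}(\lambda))-B(x_k)\|\leq\frac{\delta}{2}\|x_{k+1}(\lambda)-x_k\|.$$ In particular, the linesearch procedure (choosing the smallest such $i$ at each iteration, starting from $\lambda_{-1}>0$ and $x_0,x_{-1}\in\mathcal{H}$) always terminates, so the stepsize sequence $(\lambda_k)$ is well defined.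
   Context: $J_{\lambda A}:=(I+\lambda A)^{-1}$ denotes the resolvent. *)

(* Defs.v *)
From HB Require Import structures.
From mathcomp Require Import all_boot all_order all_algebra.
From mathcomp Require Import all_classical all_reals all_analysis.
Set Implicit Arguments. Unset Strict Implicit. Unset Printing Implicit Defensive.
Import Order.TTheory GRing.Theory Num.Theory.
Import numFieldNormedType.Exports.
Local Open Scope classical_set_scope.
Local Open Scope ring_scope.

Definition is_inner_product (R : realType) (V : normedModType R)
  (ip : V -> V -> R) : Prop :=
  [/\ (forall x y, ip x y = ip y x),
      (forall a x y z, ip (a *: x + y) z = a * ip x z + ip y z)
    & (forall x, ip x x = `|x| ^+ 2)].

(* Set-valued operators A : V ==> V are encoded by A x = the set A(x). *)
Definition monotone_op (R : realType) (V : normedModType R)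
  (ip : V -> V -> R) (A : V -> set V) : Prop :=
  forall x y u v, A x u -> A y v -> 0 <= ip (x - y) (u - v).

Definition maximally_monotone (R : realType) (V : normedModType R)
  (ip : V -> V -> R) (A : V -> set V) : Prop :=
  monotone_op ip A /\
  forall A' : V -> set V, monotone_op ip A' ->
    (forall x u, A x u -> A' x u) -> forall x u, A' x u -> A x u.

Definition locally_lipschitz (R : realType) (V W : normedModType R)
  (B : V -> W) : Prop :=
  forall x, exists2 r : R, 0 < r & exists L : R,
    forall y z, `|x - y| < r -> `|x - z| < r -> `|B y - B z| <= L * `|y - z|.

(* Resolvent J_{lam A} = (I + lam A)^{-1}: J x is the point y with
   x \in y + lam A y, i.e. lam^-1 (x - y) \in A y (unique when A is monotone
   and lam > 0, and existing for every x when A is maximally monotone, by Minty). *)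
Definition resolvent (R : realType) (V : normedModType R)
  (A : V -> set V) (lam : R) (x : V) : V :=
  xget 0 [set y | A y (lam^-1 *: (x - y))].

Definition next_iter (R : realType) (V : normedModType R)
  (A : V -> set V) (B : V -> V) (lamprev : R) (xk xkm1 : V) (lam : R) : V :=
  resolvent A lam (xk - lam *: B xk - lamprev *: (B xk - B xkm1)).

(* Main.v *)
Require Import Defs.
From HB Require Import structures.
From mathcomp Require Import all_boot all_order all_algebra.
From mathcomp Require Import all_classical all_reals all_analysis.
From mathcomp Require Import ring lra zify.
Import Order.TTheory GRing.Theory Num.Theory.
Import numFieldNormedType.Exports.
Local Open Scope classical_set_scope.
Local Open Scope ring_scope.
Lemma ip_props (R : realType) (V : normedModType R) (ip : V -> V -> R) :
  is_inner_product ip ->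
  [/\ (forall x y z, ip (x + y) z = ip x z + ip y z),
      (forall a x z, ip (a *: x) z = a * ip x z),
      (forall x y z, ip x (y + z) = ip x y + ip x z),
      (forall a x z, ip z (a *: x) = a * ip z x)
    & (forall x y z, ip (x - y) z = ip x z - ip y z /\ ip z (x - y) = ip z x - ip z y)].
Proof.
case=> hs hl hn.
have hD x y z : ip (x + y) z = ip x z + ip y z by rewrite -[x]scale1r hl mul1r scale1r.
have h0 z : ip 0 z = 0.
  by have := hD 0 0 z; rewrite addr0 => /eqP; rewrite -subr_eq subrr eq_sym => /eqP.
have hZ a x z : ip (a *: x) z = a * ip x z by rewrite -[a *: x]addr0 hl h0 addr0.
have hN x z : ip (- x) z = - ip x z by rewrite -scaleN1r hZ mulN1r.
split => //.
- by move=> x y z; rewrite hs hD hs [ip z _]hs.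
- by move=> a x z; rewrite hs hZ hs.
- move=> x y z; split; first by rewrite hD hN.
  by rewrite hs hD hN hs [ip y _]hs.
Qed.

Lemma mono_step (R : realType) (V : normedModType R) (ip : V -> V -> R)
  (di dj : V) (r s : R) :
  is_inner_product ip -> 0 < r -> r < s ->
  0 <= ip (di - dj) (s *: dj - r *: di) ->
  `|dj| ^+ 2 <= `|di| ^+ 2 /\ `|di - dj| ^+ 2 <= `|di| ^+ 2 - `|dj| ^+ 2.
Proof.
move=> hip r0 rs.
have hip' := hip; case: hip' => hs _ hn.
have [hD hZ hDr hZr hB] := @ip_props _ _ _ hip.
rewrite !(proj1 (hB _ _ _)) !(proj2 (hB _ _ _)) !hZr -!hn (hs dj di).
rewrite !(proj1 (hB _ _ _)) !(proj2 (hB _ _ _)) (hs dj di).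
set P := ip di dj; set a := ip di di; set b := ip dj dj => h.
have hd : 0 <= a - P - (P - b).
  have := sqr_ge0 `|di - dj|; rewrite -hn !(proj1 (hB _ _ _)) !(proj2 (hB _ _ _)).
  by rewrite (hs dj di).
have hba : b <= a by nra.
split => //; nra.
Qed.
Lemma ev_of_near (P : nat -> Prop) :
  (\forall n \near \oo, P n) -> exists N, forall n, (N <= n)%N -> P n.
Proof. by case=> N _ HN; exists N => n /HN. Qed.

Lemma complete_seq (R : realType) (H : completeNormedModType R) (y : nat -> H) :
  (forall e : R, 0 < e -> exists N, forall i j, (N <= i)%N -> (N <= j)%N -> `|y i - y j| < e) ->
  exists p : H, forall e : R, 0 < e -> exists N, forall i, (N <= i)%N -> `|p - y i| < e.
Proof.
move=> Hc.
have cy : cauchy (y @ \oo).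
  apply/cauchy_ballP => e e0.
  have [N HN] := Hc e e0.
  rewrite near_map2; near=> i j; rewrite -ball_normE /=; apply: HN.
    by near: i; exact: nbhs_infty_ge.
  by near: j; exact: nbhs_infty_ge.
have := cauchy_cvg _ cy => cv.
exists (lim (y @ \oo)) => e e0.
have cv' : y @ \oo --> lim (y @ \oo) by exact: cv.
move/cvgrPdist_lt: cv' => /(_ e e0).
exact: ev_of_near.
Unshelve. all: by end_near.
Qed.

Lemma pow_small (R : realType) (s : R) : 0 < s < 1 ->
  forall e : R, 0 < e -> exists N, forall n, (N <= n)%N -> s ^+ n < e.
Proof.
case/andP=> s0 s1 e e0.
have : (GRing.exp s : R ^nat) @ \oo --> 0 by apply: cvg_expr; rewrite gtr0_norm.
move/cvgrPdist_lt => /(_ e e0) /ev_of_near [N HN]; exists N => n /HN.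
by rewrite sub0r normrN gtr0_norm // exprn_gt0.
Qed.

Lemma vec_id1 (R : realType) (V : normedModType R) (a b c : V) :
  (a - c) - (b - c) = a - b.
Proof. by rewrite opprB addrA subrK. Qed.

Lemma vec_id2 (R : realType) (V : normedModType R) (b di dj : V) (r s : R) :
  (- b - r *: di) - (- b - s *: dj) = s *: dj - r *: di.
Proof. by rewrite opprB addrA opprK addrAC (addrAC (-b)) addNr add0r addrC. Qed.

Lemma sq_lt (R : realType) (x e : R) : 0 <= x -> 0 < e -> x ^+ 2 < e ^+ 2 -> x < e.
Proof. move=> x0 e0 h; rewrite ltNge; apply/negP => he; nra. Qed.
Lemma core (R : realType) (H : completeNormedModType R) (ip : H -> H -> R)
  (A : H -> set H) (B : H -> H) (delta sigma c : R) (xk w : H) (y : nat -> H) (N : nat) :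
  is_inner_product ip -> monotone_op ip A -> locally_lipschitz B ->
  0 < delta -> 0 < sigma < 1 -> 0 < c ->
  (forall i, (N <= i)%N -> A (y i) (- B xk - (c * sigma ^+ i)^-1 *: (y i - w))) ->
  exists i, c * sigma ^+ i * `|B (y i) - B xk| <= delta / 2 * `|y i - xk|.
Proof.
move=> hip hmon hlip d0 /andP[s0 s1] c0 hA.
apply: contrapT => /forallNP Hno.
have Hf i : delta / 2 * `|y i - xk| < c * sigma ^+ i * `|B (y i) - B xk|.
  by rewrite ltNge; apply/negP => h; apply: (Hno i).
have lam0 i : 0 < c * sigma ^+ i by rewrite mulr_gt0 // exprn_gt0.
have step1 i j : (N <= i)%N -> (i <= j)%N ->
  `|y j - w| ^+ 2 <= `|y i - w| ^+ 2 /\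
  `|y i - y j| ^+ 2 <= `|y i - w| ^+ 2 - `|y j - w| ^+ 2.
  move=> Ni; rewrite leq_eqVlt => /orP[/eqP <-| ij].
    by rewrite subrr normr0 expr0n /= subrr; split.
  rewrite -(@vec_id1 _ _ (y i) (y j) w).
  apply: (@mono_step _ _ ip _ _ (c * sigma ^+ i)^-1 (c * sigma ^+ j)^-1 hip).
  - by rewrite invr_gt0.
  - by rewrite ltf_pV2 ?posrE // ltr_pM2l // ltr_iXn2l.
  have := hmon _ _ _ _ (hA i Ni) (hA j (leq_trans Ni (ltnW ij))).
  by rewrite vec_id2 -(@vec_id1 _ _ (y i) (y j) w).
pose a n := `|y (n + N)%N - w| ^+ 2.
have ani : nonincreasing_seq a.
  move=> m n mn; rewrite /a.
  have mn' : (m + N <= n + N)%N by rewrite leq_add2r.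
  exact: (step1 _ _ (leq_addl m N) mn').1.
have alb : has_lbound (range a).
  by exists 0 => _ [n _ <-]; rewrite exprn_ge0.
have acv := nonincreasing_is_cvgn ani alb.
have age n := nonincreasing_cvgn_ge ani acv n.
have aev e : 0 < e -> exists M, forall n, (M <= n)%N -> a n - limn a < e.
  move=> e0.
  have acv' : a @ \oo --> limn a by exact: acv.
  move/cvgrPdist_lt: acv' => /(_ e e0) /ev_of_near [M HM]; exists M => n /HM.
  by rewrite distrC ger0_norm // subr_ge0.
have cy : forall e : R, 0 < e -> exists M, forall i j, (M <= i)%N -> (M <= j)%N ->
    `|y i - y j| < e.
  move=> e e0; have [M HM] := aev (e ^+ 2) (exprn_gt0 _ e0).
  exists (M + N)%N => i j Mi Mj.
  wlog ij : i j Mi Mj / (i <= j)%N.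
    move=> hw; case/orP: (leq_total i j) => h; first exact: hw.
    by rewrite distrC; exact: hw.
  have Ni : (N <= i)%N by lia.
  have [_ h2] := step1 i j Ni ij.
  apply: sq_lt => //.
  have h3 := HM (i - N)%N ltac:(lia).
  have h4 := age (j - N)%N.
  rewrite /a !subnK in h3 h4 => //; last by lia.
  lra.
have [p hp] := @complete_seq _ _ y cy.
have [rp rp0 [Lp hLp]] := hlip p.
have [N1 hN1] := hp rp rp0.
set M := `|Lp| * rp + `|B p - B xk|.
have M0 : 0 <= M by rewrite addr_ge0 // mulr_ge0 // ltW.
have hM i : (N1 <= i)%N -> `|B (y i) - B xk| <= M.
  move=> /hN1 hi; have := hLp (y i) p hi ltac:(by rewrite subrr normr0).
  have := ler_distD (B p) (B (y i)) (B xk).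
  have := ler_norm Lp; have := normr_ge0 (y i - p); have := normr_ge0 Lp.
  rewrite distrC in hi; rewrite /M.
  move: `|y i - p| `|B (y i) - B p| `|B p - B xk| `|B (y i) - B xk| hi => t u v z hi.
  nra.
have pxk : p = xk.
  apply/eqP; rewrite -subr_eq0 -normr_eq0; apply: contrapT => /negP hne.
  set e := `|p - xk|.
  have e0 : 0 < e by rewrite lt_def hne normr_ge0.
  have [N2 hN2] := hp (e / 2) ltac:(by rewrite divr_gt0).
  have [N3 hN3] := @pow_small _ sigma ltac:(by rewrite s0 s1)
     (delta * e / 4 / (c * (M + 1))) ltac:(by rewrite !divr_gt0 ?mulr_gt0 // ltr_wpDl).
  pose i := maxn N1 (maxn N2 N3).
  have := Hf i; have := hM i ltac:(lia); have := hN2 i ltac:(lia).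
  have := hN3 i ltac:(lia).
  rewrite ltr_pdivlMr ?mulr_gt0 // ?ltr_wpDl // => h1 h2 h3 h4.
  have := ler_distD (y i) p xk; rewrite -/e => h5.
  rewrite mulrA (mulrC (sigma ^+ i) c) in h1.
  have l0 := lam0 i.
  move: (c * sigma ^+ i) l0 h1 h4 h3 => L l0 h1 h4 h3.
  have h6 : L * `|B (y i) - B xk| <= L * M by rewrite ler_wpM2l // ltW.
  have h7 : delta / 2 * `|y i - xk| < delta * e / 4.
    apply: (lt_le_trans h4); apply: (le_trans h6).
    nra.
  have : `|y i - xk| < e / 2.
    move: `|y i - xk| h7 => t h7; nra.
  have := normr_ge0 (y i - xk).
  lra.
subst p.
have [r r0 [L hL]] := hlip xk.
have [N4 hN4] := hp r r0.
have [N5 hN5] := @pow_small _ sigma ltac:(by rewrite s0 s1)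
     (delta / (2 * c * (`|L| + 1))) ltac:(by rewrite !divr_gt0 ?mulr_gt0 // ltr_wpDl).
pose i := maxn N4 N5.
have h1 := hL (y i) xk (hN4 i ltac:(lia)) ltac:(by rewrite subrr normr0).
have := hN5 i ltac:(lia).
rewrite ltr_pdivlMr ?mulr_gt0 // ?ltr_wpDl // => h2.
have h3 := Hf i.
have l0 := lam0 i.
have hh : c * sigma ^+ i * (`|L| + 1) < delta / 2.
  have -> : c * sigma ^+ i * (`|L| + 1) = sigma ^+ i * (2 * c * (`|L| + 1)) / 2 by field.
  lra.
move: (c * sigma ^+ i) hh h3 l0 => u hh h3 l0.
have := ler_norm L; have := normr_ge0 (y i - xk); have := normr_ge0 L.
move: `|y i - xk| `|B (y i) - B xk| h1 h3 => t z h1 h3 ht hL0 hLL.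
have q1 : u * z <= u * (L * t) by rewrite ler_wpM2l // ltW.
have q2 : u * (L * t) <= u * (`|L| * t).
  by apply: ler_wpM2l; [exact: ltW | nra].
have q3 : u * `|L| <= delta / 2 by nra.
nra.
Qed.
Lemma vec_id3 (R : realType) (V : normedModType R) (x b q z : V) (lam : R) :
  lam != 0 ->
  lam^-1 *: (x - lam *: b - q - z) = - b - lam^-1 *: (z - (x - q)).
Proof.
move=> l0.
have -> : x - lam *: b - q - z = (x - q - z) - lam *: b.
  by rewrite -!addrA; congr (_ + _); rewrite addrC addrA.
by rewrite scalerBr scalerA mulVf // scale1r -scalerN opprB addrC.
Qed.

Theorem lemma3p2 (R : realType) (H : completeNormedModType R)
  (ip : H -> H -> R) (A : H -> set H) (B : H -> H)
  (delta sigma rho lamprev : R) (xk xkm1 : H) :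
  is_inner_product ip ->
  maximally_monotone ip A ->
  locally_lipschitz B ->
  0 < delta < 1 -> 0 < sigma < 1 ->
  (rho = 1 \/ rho = sigma^-1) ->
  0 < lamprev ->
  exists i : nat,
    let lam := rho * lamprev * sigma ^+ i in
    lam * `|B (next_iter A B lamprev xk xkm1 lam) - B xk|
      <= delta / 2 * `|next_iter A B lamprev xk xkm1 lam - xk|.
Proof.
move=> hip [hmon _] hlip /andP[d0 d1] hs hrho lp0.
have /andP[s0 s1] := hs.
have c0 : 0 < rho * lamprev.
  by rewrite mulr_gt0 //; case: hrho => ->; rewrite ?invr_gt0.
move: (rho * lamprev) c0 => c c0.
set q := lamprev *: (B xk - B xkm1).
pose y i := next_iter A B lamprev xk xkm1 (c * sigma ^+ i).
have lam0 i : 0 < c * sigma ^+ i by rewrite mulr_gt0 // exprn_gt0.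
pose Ne i := exists z, A z ((c * sigma ^+ i)^-1 *: (xk - (c * sigma ^+ i) *: B xk - q - z)).
case: (pselect (exists N, forall i, (N <= i)%N -> Ne i)) => [[N hN]|hN].
  have hA i : (N <= i)%N -> A (y i) (- B xk - (c * sigma ^+ i)^-1 *: (y i - (xk - q))).
    move=> /hN hi; rewrite -vec_id3 ?gt_eqF //.
    exact: (xgetPex 0 hi).
  have [i hi] := @core _ _ ip A B delta sigma c xk (xk - q) y N hip hmon hlip d0 hs c0 hA.
  by exists i.
have hN' N : exists2 i, (N <= i)%N & y i = 0.
  apply: contrapT => hc; apply: hN; exists N => i Ni.
  apply: contrapT => hne; apply: hc; exists i => //.
  rewrite /y /next_iter /resolvent xgetPN // => z hz; apply: hne; exists z; exact: hz.
have [xk0|xk0] := eqVneq xk 0.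
  have [i _ hi] := hN' 0%N; exists i => /=; rewrite -/(y i) hi xk0 !subrr !normr0 !mulr0 //.
have nx : 0 < `|xk| by rewrite normr_gt0.
have [N hN2] := @pow_small _ sigma hs (delta / 2 * `|xk| / (c * (`|B 0 - B xk| + 1)))
  ltac:(by rewrite !divr_gt0 ?mulr_gt0 // ltr_wpDl).
have [i Ni hi] := hN' N.
exists i => /=; rewrite -/(y i) hi sub0r normrN.
have := hN2 i Ni; rewrite ltr_pdivlMr ?mulr_gt0 // ?ltr_wpDl // => h.
have := normr_ge0 (B 0 - B xk); move: `|B 0 - B xk| h => t h ht.
have l0 := lam0 i; move: (sigma ^+ i) h l0 => u h l0.
nra.
Qed.
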